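(* Let $p=(p_1,p_2,p_3,p_4)$ be an ordered quadruple of distinct points of $\partial\mathbf H^2_{\mathbb C}$ and let $X_1=X(p_1,p_2,p_3,p_4)$, $X_2=X(p_1,p_3,p_2,p_4)$, $A=\mathbb A(p_1,p_2,p_3)$. Then all four points lie on a common $\mathbb R$-circle if and only if $A=0$ and $X_1,X_2$ are positive real numbers satisfying $$-2(X_1+X_2)-2X_1X_2+X_1^2+X_2^2+1=0.$$
   Context: $\mathbb C^{2,1}$ is $\mathbb C^3$ with Hermitian form $\langle Z,W\rangle=z_1\overline{w}_3+z_2\overline{w}_2+z_3\overline{w}_1$; $\mathbf H^2_{\mathbb C}$ and $\partial\mathbf H^2_{\mathbb C}$ are the negative and null lines in $\mathbb P\mathbb C^2$. An $\mathbb R$-circle is the intersection of $\partial\mathbf H^2_{\mathbb C}$ with the closure of a totally real totally geodesic 2-plane (a copy of $\mathbf H^2_{\mathbb R}$) in $\mathbf H^2_{\mathbb C}$. With null lifts $P_i$: $X(p_1,p_2,p_3,p_4)=\dfrac{\langle P_3,P_1\rangle\langle P_4,P_2\rangle}{\langle P_4,P_1\rangle\langle P_3,P_2\rangle}$ and $\mathbb A(p_1,p_2,p_3)=\arg\bigl(-\langle P_1,P_2\rangle\langle P_2,P_3\rangle\langle P_3,P_1\rangle\bigr)\in[-\pi/2,\pi/2]$. *)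

(* Defs.v *)
From Stdlib Require Import Reals.
From Coquelicot Require Import Coquelicot.
Open Scope R_scope.

Record vec := mkV { v1 : C; v2 : C; v3 : C }.

Definition vzero : vec := mkV 0%C 0%C 0%C.
Definition vadd (Z W : vec) : vec :=
  mkV (v1 Z + v1 W)%C (v2 Z + v2 W)%C (v3 Z + v3 W)%C.
Definition vscal (l : C) (Z : vec) : vec :=
  mkV (l * v1 Z)%C (l * v2 Z)%C (l * v3 Z)%C.

Definition herm (Z W : vec) : C :=
  (v1 Z * Cconj (v3 W) + v2 Z * Cconj (v2 W) + v3 Z * Cconj (v1 W))%C.

Definition null_vec (Z : vec) : Prop := Z <> vzero /\ herm Z Z = 0%C.

(** Lifts of the same point of P C^2. *)
Definition proj_eq (Z W : vec) : Prop := exists l : C, l <> 0%C /\ W = vscal l Z.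

(** Unitary transformations of C^{2,1}: C-linear maps preserving the form
    (these are automatically injective, hence in U(2,1)). *)
Definition unitary21 (g : vec -> vec) : Prop :=
  (forall Z W, g (vadd Z W) = vadd (g Z) (g W)) /\
  (forall l Z, g (vscal l Z) = vscal l (g Z)) /\
  (forall Z W, herm (g Z) (g W) = herm Z W).

Definition real_vec (x1 x2 x3 : R) : vec := mkV (RtoC x1) (RtoC x2) (RtoC x3).

(** The boundary of the closure of the copy g(H^2_R) of the real hyperbolic
    plane (H^2_R = projectivised negative vectors of R^3): the null lines
    spanned by g x, x a nonzero real null vector. *)
Definition Rcircle_of (g : vec -> vec) (P : vec) : Prop :=
  null_vec P /\
  exists x1 x2 x3 : R, real_vec x1 x2 x3 <> vzero /\
    herm (real_vec x1 x2 x3) (real_vec x1 x2 x3) = 0%C /\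
    proj_eq (g (real_vec x1 x2 x3)) P.

(** An R-circle: a set of (lifts of) boundary points which is the boundary
    of some copy g(H^2_R), g in U(2,1). *)
Definition is_Rcircle (S : vec -> Prop) : Prop :=
  exists g, unitary21 g /\ forall P, S P <-> Rcircle_of g P.

Definition crossX (P1 P2 P3 P4 : vec) : C :=
  ((herm P3 P1 * herm P4 P2) / (herm P4 P1 * herm P3 P2))%C.

(** Principal argument (atan2 convention, values in (-PI, PI]). *)
Definition carg (z : C) : R :=
  let a := Re z in let b := Im z in
  if Rlt_dec 0 a then atan (b / a)
  else if Rlt_dec a 0 then
    (if Rle_dec 0 b then atan (b / a) + PI else atan (b / a) - PI)
  else if Rlt_dec 0 b then PI / 2
  else if Rlt_dec b 0 then - (PI / 2)
  else 0.

Definition cartanA (P1 P2 P3 : vec) : R :=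
  carg (- (herm P1 P2 * herm P2 P3 * herm P3 P1))%C.

Definition pos_real (z : C) : Prop := Im z = 0 /\ 0 < Re z.

(* Main.v *)
Require Import Defs.
From Stdlib Require Import Reals Lra.
From Coquelicot Require Import Coquelicot.
Open Scope R_scope.

Lemma C_ext (a b : C) : Re a = Re b -> Im a = Im b -> a = b.
Proof. destruct a, b; simpl; intros; subst; reflexivity. Qed.

Lemma vec_ext (a b : vec) : v1 a = v1 b -> v2 a = v2 b -> v3 a = v3 b -> a = b.
Proof. destruct a, b; simpl; intros; subst; reflexivity. Qed.

Lemma Cconj_R (r : R) : Cconj (RtoC r) = RtoC r.
Proof. apply C_ext; simpl; lra. Qed.

Lemma herm_sym (Z W : vec) : Cconj (herm Z W) = herm W Z.
Proof. unfold herm. rewrite !Cplus_conj, !Cmult_conj, !Cconj_conj. ring. Qed.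

Lemma Cinv0 : Cinv (RtoC 0) = RtoC 0.
Proof. apply C_ext; simpl; unfold Rdiv; ring. Qed.

Lemma Cinv_nz (z : C) : z <> RtoC 0 -> Cinv z <> RtoC 0.
Proof. intros H E. apply C1_nz. rewrite <- (Cinv_l z H), E. ring. Qed.

Lemma Cconj_nz (z : C) : z <> RtoC 0 -> Cconj z <> RtoC 0.
Proof. intros H E. apply H. rewrite <- (Cconj_conj z), E, Cconj_R. reflexivity. Qed.

Lemma frac_nz (a b c d : C) : (a * b / (c * d))%C <> RtoC 0 ->
  a <> RtoC 0 /\ b <> RtoC 0 /\ c <> RtoC 0 /\ d <> RtoC 0.
Proof.
  intros H. unfold Cdiv in H.
  repeat split; intro E; apply H; rewrite E;
  try (rewrite ?Cmult_0_l, ?Cmult_0_r; ring);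
  try (rewrite ?Cmult_0_l, ?Cmult_0_r, Cinv0; ring).
Qed.

Lemma carg_zero (z : C) : carg z = 0 -> z <> RtoC 0 -> Im z = 0 /\ 0 < Re z.
Proof.
  unfold carg. intros H Hz. pose proof PI_RGT_0.
  destruct (Rlt_dec 0 (Re z)) as [Ha|Ha].
  - apply atan_eq0 in H. split; auto.
    assert (Im z = Im z / Re z * Re z) by (field; lra). rewrite H in H1. lra.
  - destruct (Rlt_dec (Re z) 0) as [Hb|Hb].
    + pose proof (atan_bound (Im z / Re z)).
      destruct (Rle_dec 0 (Im z)); lra.
    + destruct (Rlt_dec 0 (Im z)). lra.
      destruct (Rlt_dec (Im z) 0). lra.
      exfalso. apply Hz. apply C_ext; simpl; lra.
Qed.

Lemma carg_pos (r : R) : 0 < r -> carg (RtoC r) = 0.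
Proof.
  intros H. unfold carg. rewrite re_RtoC, im_RtoC.
  destruct (Rlt_dec 0 r); [|lra]. unfold Rdiv. rewrite Rmult_0_l. apply atan_0.
Qed.

Lemma C_real (z : C) : Im z = 0 -> z = RtoC (Re z).
Proof. intros; apply C_ext; simpl; auto. Qed.
Definition gmap (C1 C2 C3 Z : vec) : vec :=
  mkV (v1 Z * v1 C1 + v2 Z * v1 C2 + v3 Z * v1 C3)%C
      (v1 Z * v2 C1 + v2 Z * v2 C2 + v3 Z * v2 C3)%C
      (v1 Z * v3 C1 + v2 Z * v3 C2 + v3 Z * v3 C3)%C.

Lemma herm_gmap (C1 C2 C3 Z W : vec) :
  herm (gmap C1 C2 C3 Z) (gmap C1 C2 C3 W) =
  (v1 Z * Cconj (v1 W) * herm C1 C1 + v1 Z * Cconj (v2 W) * herm C1 C2 + v1 Z * Cconj (v3 W) * herm C1 C3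
 + v2 Z * Cconj (v1 W) * herm C2 C1 + v2 Z * Cconj (v2 W) * herm C2 C2 + v2 Z * Cconj (v3 W) * herm C2 C3
 + v3 Z * Cconj (v1 W) * herm C3 C1 + v3 Z * Cconj (v2 W) * herm C3 C2 + v3 Z * Cconj (v3 W) * herm C3 C3)%C.
Proof. unfold herm, gmap; simpl. rewrite !Cplus_conj, !Cmult_conj. ring. Qed.

Lemma herm_gmap_l (C1 C2 C3 Z W : vec) :
  herm (gmap C1 C2 C3 Z) W =
  (v1 Z * herm C1 W + v2 Z * herm C2 W + v3 Z * herm C3 W)%C.
Proof. unfold herm, gmap; simpl. ring. Qed.

Definition frame (C1 C2 C3 : vec) : Prop :=
  herm C1 C1 = RtoC 0 /\ herm C1 C2 = RtoC 0 /\ herm C1 C3 = RtoC 1 /\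
  herm C2 C2 = RtoC 1 /\ herm C2 C3 = RtoC 0 /\ herm C3 C3 = RtoC 0.

Lemma frame_unitary C1 C2 C3 : frame C1 C2 C3 -> unitary21 (gmap C1 C2 C3).
Proof.
  intros (H11 & H12 & H13 & H22 & H23 & H33).
  assert (H21 : herm C2 C1 = RtoC 0) by (rewrite <- herm_sym, H12, Cconj_R; auto).
  assert (H31 : herm C3 C1 = RtoC 1) by (rewrite <- herm_sym, H13, Cconj_R; auto).
  assert (H32 : herm C3 C2 = RtoC 0) by (rewrite <- herm_sym, H23, Cconj_R; auto).
  split; [|split].
  - intros Z W; apply vec_ext; unfold gmap, vadd; simpl; ring.
  - intros l Z; apply vec_ext; unfold gmap, vscal; simpl; ring.
  - intros Z W. rewrite herm_gmap, H11, H12, H13, H21, H22, H23, H31, H32, H33.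
    unfold herm. ring.
Qed.

Definition det3C (a b c d e f g h i : C) : C :=
  (a*(e*i - f*h) - b*(d*i - f*g) + c*(d*h - e*g))%C.

Lemma gram_det (C1 C2 C3 : vec) :
  det3C (herm C1 C1) (herm C1 C2) (herm C1 C3) (herm C2 C1) (herm C2 C2) (herm C2 C3)
        (herm C3 C1) (herm C3 C2) (herm C3 C3) =
  (- (det3C (v1 C1) (v2 C1) (v3 C1) (v1 C2) (v2 C2) (v3 C2) (v1 C3) (v2 C3) (v3 C3) *
      Cconj (det3C (v1 C1) (v2 C1) (v3 C1) (v1 C2) (v2 C2) (v3 C2) (v1 C3) (v2 C3) (v3 C3))))%C.
Proof.
  unfold det3C, herm. repeat rewrite ?Cplus_conj, ?Cminus_conj, ?Cmult_conj.
  generalize (v1 C1) (v2 C1) (v3 C1) (v1 C2) (v2 C2) (v3 C2) (v1 C3) (v2 C3) (v3 C3). intros. ring.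
Qed.

Lemma frame_det C1 C2 C3 : frame C1 C2 C3 ->
  det3C (v1 C1) (v2 C1) (v3 C1) (v1 C2) (v2 C2) (v3 C2) (v1 C3) (v2 C3) (v3 C3) <> RtoC 0.
Proof.
  intros Hf E. pose proof (gram_det C1 C2 C3) as G.
  destruct Hf as (H11 & H12 & H13 & H22 & H23 & H33).
  rewrite <- (herm_sym C1 C2), <- (herm_sym C1 C3), <- (herm_sym C2 C3) in G.
  rewrite H11, H12, H13, H22, H23, H33, !Cconj_R, E in G.
  unfold det3C in G. apply C1_nz.
  apply (f_equal (fun z => Copp z)) in G.
  revert G. intros G. ring_simplify in G. exact G.
Qed.

Lemma Cmult_eq0 (a b : C) : a <> RtoC 0 -> (a * b)%C = RtoC 0 -> b = RtoC 0.
Proof. intros Ha H. replace b with (/a * (a * b))%C by (field; auto). rewrite H. ring. Qed.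

Lemma cramer (a b c d e f g h i x y z : C) :
  det3C a b c d e f g h i <> RtoC 0 ->
  (a*x + b*y + c*z = RtoC 0)%C -> (d*x + e*y + f*z = RtoC 0)%C -> (g*x + h*y + i*z = RtoC 0)%C ->
  x = RtoC 0 /\ y = RtoC 0 /\ z = RtoC 0.
Proof.
  intros HD E1 E2 E3. repeat split; eapply Cmult_eq0; eauto.
  - replace (det3C a b c d e f g h i * x)%C with
      ((e*i - f*h) * (a*x + b*y + c*z) - (b*i - c*h) * (d*x + e*y + f*z) + (b*f - c*e) * (g*x + h*y + i*z))%C
      by (unfold det3C; ring).
    rewrite E1, E2, E3. ring.
  - replace (det3C a b c d e f g h i * y)%C with
      (- (d*i - f*g) * (a*x + b*y + c*z) + (a*i - c*g) * (d*x + e*y + f*z) - (a*f - c*d) * (g*x + h*y + i*z))%C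
      by (unfold det3C; ring).
    rewrite E1, E2, E3. ring.
  - replace (det3C a b c d e f g h i * z)%C with
      ((d*h - e*g) * (a*x + b*y + c*z) - (a*h - b*g) * (d*x + e*y + f*z) + (a*e - b*d) * (g*x + h*y + i*z))%C
      by (unfold det3C; ring).
    rewrite E1, E2, E3. ring.
Qed.

Lemma conj_inj (a b : C) : Cconj a = Cconj b -> a = b.
Proof. intros H. rewrite <- (Cconj_conj a), <- (Cconj_conj b), H. reflexivity. Qed.

Lemma frame_inj C1 C2 C3 y v : frame C1 C2 C3 ->
  herm y C1 = herm v C1 -> herm y C2 = herm v C2 -> herm y C3 = herm v C3 -> y = v.
Proof.
  intros Hf E1 E2 E3. pose proof (frame_det _ _ _ Hf) as HD.
  apply (f_equal Cconj) in E1, E2, E3. rewrite !herm_sym in E1, E2, E3.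
  unfold herm in E1, E2, E3.
  destruct (cramer _ _ _ _ _ _ _ _ _ (Cconj (v3 y) - Cconj (v3 v)) (Cconj (v2 y) - Cconj (v2 v))
     (Cconj (v1 y) - Cconj (v1 v)) HD) as (X3 & X2 & X1).
  - match goal with |- ?L = _ => replace L with ((v1 C1 * Cconj (v3 y) + v2 C1 * Cconj (v2 y) + v3 C1 * Cconj (v1 y)) - (v1 C1 * Cconj (v3 v) + v2 C1 * Cconj (v2 v) + v3 C1 * Cconj (v1 v)))%C by ring end.
    rewrite E1. ring.
  - match goal with |- ?L = _ => replace L with ((v1 C2 * Cconj (v3 y) + v2 C2 * Cconj (v2 y) + v3 C2 * Cconj (v1 y)) - (v1 C2 * Cconj (v3 v) + v2 C2 * Cconj (v2 v) + v3 C2 * Cconj (v1 v)))%C by ring end.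
    rewrite E2. ring.
  - match goal with |- ?L = _ => replace L with ((v1 C3 * Cconj (v3 y) + v2 C3 * Cconj (v2 y) + v3 C3 * Cconj (v1 y)) - (v1 C3 * Cconj (v3 v) + v2 C3 * Cconj (v2 v) + v3 C3 * Cconj (v1 v)))%C by ring end.
    rewrite E3. ring.
  - apply vec_ext; apply conj_inj.
    + replace (Cconj (v1 y)) with ((Cconj (v1 y) - Cconj (v1 v)) + Cconj (v1 v))%C by ring.
      rewrite X1. ring.
    + replace (Cconj (v2 y)) with ((Cconj (v2 y) - Cconj (v2 v)) + Cconj (v2 v))%C by ring.
      rewrite X2. ring.
    + replace (Cconj (v3 y)) with ((Cconj (v3 y) - Cconj (v3 v)) + Cconj (v3 v))%C by ring.
      rewrite X3. ring.
Qed.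

Lemma frame_decomp C1 C2 C3 v : frame C1 C2 C3 ->
  v = gmap C1 C2 C3 (mkV (herm v C3) (herm v C2) (herm v C1)).
Proof.
  intros Hf. symmetry. apply (frame_inj C1 C2 C3); auto;
  rewrite herm_gmap_l; simpl;
  destruct Hf as (H11 & H12 & H13 & H22 & H23 & H33).
  - rewrite H11, <- (herm_sym C1 C2), H12, <- (herm_sym C1 C3), H13, !Cconj_R. ring.
  - rewrite H12, H22, <- (herm_sym C2 C3), H23, !Cconj_R. ring.
  - rewrite H13, H23, H33. ring.
Qed.

Lemma herm_scal_l l Z W : herm (vscal l Z) W = (l * herm Z W)%C.
Proof. unfold herm, vscal; simpl. ring. Qed.
Lemma herm_scal_r l Z W : herm Z (vscal l W) = (Cconj l * herm Z W)%C.
Proof. unfold herm, vscal; simpl. rewrite !Cmult_conj. ring. Qed.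
Lemma herm_add_l Z Z' W : herm (vadd Z Z') W = (herm Z W + herm Z' W)%C.
Proof. unfold herm, vadd; simpl. ring. Qed.
Lemma herm_add_r Z W W' : herm Z (vadd W W') = (herm Z W + herm Z W')%C.
Proof. unfold herm, vadd; simpl. rewrite !Cplus_conj. ring. Qed.

Lemma herm_real a b c : herm (real_vec a b c) (real_vec a b c) = RtoC (a*c + b*b + c*a).
Proof. unfold herm, real_vec; simpl. rewrite !Cconj_R, !RtoC_plus, !RtoC_mult. reflexivity. Qed.

Lemma gmap_scal C1 C2 C3 l Z : gmap C1 C2 C3 (vscal l Z) = vscal l (gmap C1 C2 C3 Z).
Proof. apply vec_ext; unfold gmap, vscal; simpl; ring. Qed.

Lemma RtoC_neq (a b : R) : a <> b -> RtoC a <> RtoC b.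
Proof. intros H E. apply H. apply (f_equal Re) in E. simpl in E. exact E. Qed.

Lemma real_vec_nz a b c : a <> 0 -> real_vec a b c <> vzero.
Proof. intros H E. apply (f_equal v1) in E. simpl in E. apply (RtoC_neq a 0 H). exact E. Qed.

Lemma null_real a b c : a*c + b*b + c*a = 0 -> herm (real_vec a b c) (real_vec a b c) = RtoC 0.
Proof. intros H. rewrite herm_real, H. reflexivity. Qed.

Ltac hexp := repeat rewrite ?herm_add_l, ?herm_add_r, ?herm_scal_l, ?herm_scal_r.

Lemma build (P1 P2 P3 P4 : vec) (b x1 x2 : R) :
  null_vec P1 -> null_vec P2 -> null_vec P3 -> null_vec P4 ->
  b <> 0 ->
  herm P1 P2 <> RtoC 0 -> herm P2 P1 <> RtoC 0 -> herm P3 P2 <> RtoC 0 -> herm P2 P3 <> RtoC 0 ->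
  herm P4 P1 <> RtoC 0 -> herm P4 P2 <> RtoC 0 ->
  (RtoC 2 * herm P3 P1 = - (RtoC b * RtoC b * herm P2 P1 * herm P3 P2))%C ->
  RtoC x1 = crossX P1 P2 P3 P4 -> RtoC x2 = crossX P1 P3 P2 P4 -> 0 < x1 ->
  x1*x1 + x2*x2 + 1 - 2*x1 - 2*x2 - 2*x1*x2 = 0 ->
  exists g, unitary21 g /\ Rcircle_of g P1 /\ Rcircle_of g P2 /\ Rcircle_of g P3 /\ Rcircle_of g P4.
Proof.
  intros N1 N2 N3 N4 Hb H12 H21 H32 H23 H41 H42 F HX1 HX2 Hx1 Heq.
  assert (Hb' : RtoC b <> RtoC 0) by (apply RtoC_neq; auto).
  assert (F' : (RtoC 2 * herm P1 P3 = - (RtoC b * RtoC b * herm P1 P2 * herm P2 P3))%C).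
  { apply (f_equal Cconj) in F. rewrite !Cmult_conj, Copp_conj, !Cmult_conj, !Cconj_R, !herm_sym in F.
    exact F. }
  assert (E31 : herm P3 P1 = (- (RtoC b * RtoC b * herm P2 P1 * herm P3 P2) / RtoC 2)%C).
  { rewrite <- F. field. }
  assert (E13 : herm P1 P3 = (- (RtoC b * RtoC b * herm P1 P2 * herm P2 P3) / RtoC 2)%C).
  { rewrite <- F'. field. }
  pose proof N1 as N1'; pose proof N2 as N2'; pose proof N3 as N3'; pose proof N4 as N4'.
  destruct N1 as [_ N11], N2 as [_ N22], N3 as [_ N33], N4 as [N40 N44].
  set (al := (/ (RtoC b * herm P1 P2))%C).
  set (ga := (/ (RtoC b * herm P3 P2))%C).
  assert (cal : Cconj al = (/ (RtoC b * herm P2 P1))%C).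
  { unfold al. rewrite Cinv_conj, Cmult_conj, Cconj_R, herm_sym; auto.
    apply Cmult_neq_0; auto. }
  assert (cga : Cconj ga = (/ (RtoC b * herm P2 P3))%C).
  { unfold ga. rewrite Cinv_conj, Cmult_conj, Cconj_R, herm_sym; auto.
    apply Cmult_neq_0; auto. }
  set (C1 := vscal al P1).
  set (C3 := vscal (RtoC b) P2).
  set (C2 := vadd (vadd (vscal ga P3) (vscal (- al) P1)) (vscal (RtoC (b/2)) P2)).
  assert (Hb2 : RtoC (b/2) = (RtoC b / RtoC 2)%C).
  { apply RtoC_div. lra. }
  assert (H2 : RtoC 2 <> RtoC 0) by (apply RtoC_neq; lra).
  assert (Hf : frame C1 C2 C3).
  { unfold frame, C1, C2, C3. hexp.
    rewrite ?Copp_conj, ?Cconj_R, ?cal, ?cga, ?N11, ?N22, ?N33, ?E31, ?E13, ?Hb2.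
    unfold al, ga. repeat split; (field; try (repeat split; assumption)). }
  exists (gmap C1 C2 C3). split; [apply frame_unitary; auto|].
  assert (Hx1' : RtoC x1 <> RtoC 0) by (apply RtoC_neq; lra).
  split; [split; [exact N1'|] |]. 2: split; [split; [exact N2'|]|]. 3: split; [split;[exact N3'|]|]. 4: split; [exact N4'|].
  - exists 1, 0, 0. split; [apply real_vec_nz; lra|]. split; [apply null_real; lra|].
    exists (RtoC b * herm P1 P2)%C. split; [apply Cmult_neq_0; auto|].
    unfold C1, C2, C3, al, ga.
    apply vec_ext; cbn [gmap vscal vadd real_vec v1 v2 v3]; (field; try (repeat split; assumption)).
  - exists 0, 0, 1. split. { intros E. apply (f_equal v3) in E. simpl in E. apply (RtoC_neq 1 0); [lra|exact E]. }
    split; [apply null_real; lra|].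
    exists (/ RtoC b)%C. split; [apply Cinv_nz; auto|].
    unfold C1, C2, C3, al, ga.
    apply vec_ext; cbn [gmap vscal vadd real_vec v1 v2 v3]; rewrite ?Hb2; (field; try (repeat split; assumption)).
  - exists 2, 2, (-1). split; [apply real_vec_nz; lra|]. split; [apply null_real; lra|].
    exists (RtoC b * herm P3 P2 / RtoC 2)%C. split.
    { apply Cmult_neq_0; [apply Cmult_neq_0; auto | apply Cinv_nz; auto]. }
    unfold C1, C2, C3, al, ga.
    apply vec_ext; cbn [gmap vscal vadd real_vec v1 v2 v3]; rewrite ?Hb2; (field; try (repeat split; assumption)).
  - exists (2*x1), (x1+1-x2), (-1). split; [apply real_vec_nz; lra|]. split; [apply null_real; nra|].
    assert (HC3 : herm P4 C3 = (RtoC b * herm P4 P2)%C).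
    { unfold C3. rewrite herm_scal_r, Cconj_R. reflexivity. }
    exists (herm P4 C3 / (RtoC 2 * RtoC x1))%C. split.
    { rewrite HC3. apply Cmult_neq_0; [apply Cmult_neq_0; auto | apply Cinv_nz, Cmult_neq_0; auto]. }
    rewrite <- gmap_scal. rewrite (frame_decomp C1 C2 C3 P4 Hf) at 1. f_equal.
    rewrite HC3. unfold C1, C2. hexp.
    rewrite ?Copp_conj, ?Cconj_R, ?cal, ?cga.
    apply vec_ext; cbn [vscal real_vec v1 v2 v3]; repeat rewrite ?RtoC_mult, ?RtoC_plus, ?RtoC_minus; rewrite ?Hb2, ?HX1, ?HX2;
      unfold crossX; rewrite ?E31; (field; try (repeat split; assumption)).
Qed.

Definition rf (a1 a2 a3 b1 b2 b3 : R) : R := a1*b3 + a2*b2 + a3*b1.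

Lemma sq0 (x : R) : x * x = 0 -> x = 0.
Proof. intros H. destruct (Rmult_integral _ _ H); auto. Qed.

Lemma orth_prop a1 a2 a3 b1 b2 b3 :
  rf a1 a2 a3 a1 a2 a3 = 0 -> rf b1 b2 b3 b1 b2 b3 = 0 ->
  ~ (a1 = 0 /\ a2 = 0 /\ a3 = 0) -> ~ (b1 = 0 /\ b2 = 0 /\ b3 = 0) ->
  rf a1 a2 a3 b1 b2 b3 = 0 ->
  exists t, b1 = t * a1 /\ b2 = t * a2 /\ b3 = t * a3.
Proof.
  unfold rf. intros Na Nb Za Zb R0.
  destruct (Req_dec a1 0) as [Ha|Ha].
  - subst a1. assert (a2 = 0) by (apply sq0; lra). subst a2.
    assert (a3 <> 0) by (intro; apply Za; auto).
    assert (b1 = 0). { assert (a3 * b1 = 0) by lra. destruct (Rmult_integral _ _ H0); auto. contradiction. }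
    subst b1. assert (b2 = 0) by (apply sq0; lra). subst b2.
    exists (b3 / a3). repeat split; try ring. field. auto.
  - destruct (Req_dec b1 0) as [Hb|Hb].
    + subst b1. assert (b2 = 0) by (apply sq0; lra). subst b2.
      assert (b3 <> 0) by (intro; apply Zb; auto).
      exfalso. assert (a1 * b3 = 0) by lra. destruct (Rmult_integral _ _ H0); auto.
    + assert (K : (a1*b2 - a2*b1) * (a1*b2 - a2*b1) = 0).
      { replace ((a1*b2 - a2*b1) * (a1*b2 - a2*b1)) with
          (- (2*a1*b1*(a1*b3 + a2*b2 + a3*b1)) + a1*a1*(b1*b3 + b2*b2 + b3*b1) + b1*b1*(a1*a3+a2*a2+a3*a1)) by ring.
        rewrite R0, Na, Nb. ring. }
      apply sq0 in K.
      assert (K2 : (2*a1*b1) * (a1*b3 - b1*a3) = 0).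
      { replace ((2*a1*b1) * (a1*b3 - b1*a3)) with
          (a1*a1*(b1*b3 + b2*b2 + b3*b1) - b1*b1*(a1*a3+a2*a2+a3*a1) - (a1*b2 - a2*b1)*(a1*b2+a2*b1)) by ring.
        rewrite K, Na, Nb. ring. }
      destruct (Rmult_integral _ _ K2) as [K3|K3].
      { exfalso. assert (2 * a1 * b1 <> 0). { apply Rmult_integral_contrapositive_currified; [|auto].
          apply Rmult_integral_contrapositive_currified; lra. } contradiction. }
      exists (b1 / a1). repeat split.
      * field. auto.
      * replace b2 with ((a1*b2)/a1) by (field; auto).
        replace (a1*b2) with (a2*b1) by lra. field. auto.
      * replace b3 with ((a1*b3)/a1) by (field; auto).
        replace (a1*b3) with (b1*a3) by lra. field. auto.
Qed.

Lemma rf_sym a1 a2 a3 b1 b2 b3 : rf a1 a2 a3 b1 b2 b3 = rf b1 b2 b3 a1 a2 a3.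
Proof. unfold rf; ring. Qed.

Definition det3 (a b c d e f g h i : R) : R := a*(e*i - f*h) - b*(d*i - f*g) + c*(d*h - e*g).

Lemma tri a1 a2 a3 b1 b2 b3 c1 c2 c3 :
  rf a1 a2 a3 a1 a2 a3 = 0 -> rf b1 b2 b3 b1 b2 b3 = 0 -> rf c1 c2 c3 c1 c2 c3 = 0 ->
  rf a1 a2 a3 b1 b2 b3 * rf b1 b2 b3 c1 c2 c3 * rf c1 c2 c3 a1 a2 a3 <= 0.
Proof.
  intros Na Nb Nc.
  assert (E : det3 (rf a1 a2 a3 a1 a2 a3) (rf a1 a2 a3 b1 b2 b3) (rf a1 a2 a3 c1 c2 c3)
                   (rf b1 b2 b3 a1 a2 a3) (rf b1 b2 b3 b1 b2 b3) (rf b1 b2 b3 c1 c2 c3)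
                   (rf c1 c2 c3 a1 a2 a3) (rf c1 c2 c3 b1 b2 b3) (rf c1 c2 c3 c1 c2 c3)
              = - (det3 a1 a2 a3 b1 b2 b3 c1 c2 c3 * det3 a1 a2 a3 b1 b2 b3 c1 c2 c3))
    by (unfold det3, rf; ring).
  rewrite Na, Nb, Nc, (rf_sym b1 b2 b3 a1 a2 a3), (rf_sym a1 a2 a3 c1 c2 c3),
    (rf_sym c1 c2 c3 b1 b2 b3) in E.
  unfold det3 at 1 in E.
  pose proof (Rle_0_sqr (det3 a1 a2 a3 b1 b2 b3 c1 c2 c3)). unfold Rsqr in H.
  rewrite (rf_sym c1 c2 c3 a1 a2 a3). rewrite (rf_sym c1 c2 c3 a1 a2 a3) in E.
  assert (E2 : 2 * (rf a1 a2 a3 b1 b2 b3 * rf b1 b2 b3 c1 c2 c3 * rf a1 a2 a3 c1 c2 c3) =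
     - (det3 a1 a2 a3 b1 b2 b3 c1 c2 c3 * det3 a1 a2 a3 b1 b2 b3 c1 c2 c3)) by (rewrite <- E; ring).
  lra.
Qed.

Definition det4 m11 m12 m13 m14 m21 m22 m23 m24 m31 m32 m33 m34 m41 m42 m43 m44 :=
  m11 * det3 m22 m23 m24 m32 m33 m34 m42 m43 m44
  - m12 * det3 m21 m23 m24 m31 m33 m34 m41 m43 m44
  + m13 * det3 m21 m22 m24 m31 m32 m34 m41 m42 m44
  - m14 * det3 m21 m22 m23 m31 m32 m33 m41 m42 m43.

Lemma quad a1 a2 a3 b1 b2 b3 c1 c2 c3 d1 d2 d3 :
  rf a1 a2 a3 a1 a2 a3 = 0 -> rf b1 b2 b3 b1 b2 b3 = 0 -> rf c1 c2 c3 c1 c2 c3 = 0 ->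
  rf d1 d2 d3 d1 d2 d3 = 0 ->
  let r12 := rf a1 a2 a3 b1 b2 b3 in let r13 := rf a1 a2 a3 c1 c2 c3 in
  let r14 := rf a1 a2 a3 d1 d2 d3 in let r23 := rf b1 b2 b3 c1 c2 c3 in
  let r24 := rf b1 b2 b3 d1 d2 d3 in let r34 := rf c1 c2 c3 d1 d2 d3 in
  r12*r12*r34*r34 + r13*r13*r24*r24 + r14*r14*r23*r23 - 2*r12*r34*r13*r24
  - 2*r12*r34*r14*r23 - 2*r13*r24*r14*r23 = 0.
Proof.
  intros Na Nb Nc Nd.
  assert (E : det4 (rf a1 a2 a3 a1 a2 a3) (rf a1 a2 a3 b1 b2 b3) (rf a1 a2 a3 c1 c2 c3) (rf a1 a2 a3 d1 d2 d3)
       (rf b1 b2 b3 a1 a2 a3) (rf b1 b2 b3 b1 b2 b3) (rf b1 b2 b3 c1 c2 c3) (rf b1 b2 b3 d1 d2 d3)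
       (rf c1 c2 c3 a1 a2 a3) (rf c1 c2 c3 b1 b2 b3) (rf c1 c2 c3 c1 c2 c3) (rf c1 c2 c3 d1 d2 d3)
       (rf d1 d2 d3 a1 a2 a3) (rf d1 d2 d3 b1 b2 b3) (rf d1 d2 d3 c1 c2 c3) (rf d1 d2 d3 d1 d2 d3) = 0)
    by (unfold det4, det3, rf; ring).
  rewrite Na, Nb, Nc, Nd, (rf_sym b1 b2 b3 a1 a2 a3), (rf_sym c1 c2 c3 a1 a2 a3), (rf_sym d1 d2 d3 a1 a2 a3),
    (rf_sym c1 c2 c3 b1 b2 b3), (rf_sym d1 d2 d3 b1 b2 b3), (rf_sym d1 d2 d3 c1 c2 c3) in E.
  intros. unfold det4, det3 in E. subst r12 r13 r14 r23 r24 r34. rewrite <- E. ring.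
Qed.

Lemma herm_realv a1 a2 a3 b1 b2 b3 :
  herm (real_vec a1 a2 a3) (real_vec b1 b2 b3) = RtoC (rf a1 a2 a3 b1 b2 b3).
Proof. unfold herm, real_vec, rf; simpl. rewrite !Cconj_R, !RtoC_plus, !RtoC_mult. reflexivity. Qed.

Lemma herm_lift g l m a1 a2 a3 b1 b2 b3 : unitary21 g ->
  herm (vscal l (g (real_vec a1 a2 a3))) (vscal m (g (real_vec b1 b2 b3))) =
  (l * Cconj m * RtoC (rf a1 a2 a3 b1 b2 b3))%C.
Proof.
  intros (_ & _ & Hg). rewrite herm_scal_l, herm_scal_r, Hg, herm_realv. ring.
Qed.

Lemma pos_ratio x y : 0 < x * y -> 0 < x / y.
Proof.
  intros H. destruct (Req_dec y 0) as [E|E]. { subst; lra. }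
  replace (x / y) with ((x * y) / (y * y)) by (field; auto).
  apply Rdiv_lt_0_compat; auto. nra.
Qed.

Lemma sign4 a b c d e : a * b * c < 0 -> a * d * e < 0 -> a <> 0 -> 0 < b * c * d * e.
Proof.
  intros H1 H2 Ha.
  assert (0 < (a*b*c) * (a*d*e)) by nra.
  assert (0 < a * a) by nra.
  replace ((a*b*c) * (a*d*e)) with ((a*a) * (b*c*d*e)) in H by ring.
  nra.
Qed.

Lemma tri_lt a1 a2 a3 b1 b2 b3 c1 c2 c3 :
  rf a1 a2 a3 a1 a2 a3 = 0 -> rf b1 b2 b3 b1 b2 b3 = 0 -> rf c1 c2 c3 c1 c2 c3 = 0 ->
  rf a1 a2 a3 b1 b2 b3 <> 0 -> rf b1 b2 b3 c1 c2 c3 <> 0 -> rf a1 a2 a3 c1 c2 c3 <> 0 ->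
  rf a1 a2 a3 b1 b2 b3 * rf b1 b2 b3 c1 c2 c3 * rf a1 a2 a3 c1 c2 c3 < 0.
Proof.
  intros Na Nb Nc H1 H2 H3. pose proof (tri _ _ _ _ _ _ _ _ _ Na Nb Nc) as T.
  rewrite (rf_sym c1 c2 c3) in T.
  assert (rf a1 a2 a3 b1 b2 b3 * rf b1 b2 b3 c1 c2 c3 * rf a1 a2 a3 c1 c2 c3 <> 0).
  { repeat apply Rmult_integral_contrapositive_currified; auto. }
  lra.
Qed.

Lemma forward g P1 P2 P3 P4 l1 l2 l3 l4 a1 a2 a3 b1 b2 b3 c1 c2 c3 d1 d2 d3 :
  unitary21 g ->
  l1 <> RtoC 0 -> l2 <> RtoC 0 -> l3 <> RtoC 0 -> l4 <> RtoC 0 ->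
  P1 = vscal l1 (g (real_vec a1 a2 a3)) -> P2 = vscal l2 (g (real_vec b1 b2 b3)) ->
  P3 = vscal l3 (g (real_vec c1 c2 c3)) -> P4 = vscal l4 (g (real_vec d1 d2 d3)) ->
  rf a1 a2 a3 a1 a2 a3 = 0 -> rf b1 b2 b3 b1 b2 b3 = 0 -> rf c1 c2 c3 c1 c2 c3 = 0 ->
  rf d1 d2 d3 d1 d2 d3 = 0 ->
  rf a1 a2 a3 b1 b2 b3 <> 0 -> rf a1 a2 a3 c1 c2 c3 <> 0 -> rf a1 a2 a3 d1 d2 d3 <> 0 ->
  rf b1 b2 b3 c1 c2 c3 <> 0 -> rf b1 b2 b3 d1 d2 d3 <> 0 -> rf c1 c2 c3 d1 d2 d3 <> 0 ->
  (cartanA P1 P2 P3 = 0%R /\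
    pos_real (crossX P1 P2 P3 P4) /\ pos_real (crossX P1 P3 P2 P4) /\
    ((- RtoC 2) * (crossX P1 P2 P3 P4 + crossX P1 P3 P2 P4)
     - RtoC 2 * crossX P1 P2 P3 P4 * crossX P1 P3 P2 P4
     + crossX P1 P2 P3 P4 * crossX P1 P2 P3 P4
     + crossX P1 P3 P2 P4 * crossX P1 P3 P2 P4 + RtoC 1 = RtoC 0)%C).
Proof.
  intros Hg L1 L2 L3 L4 E1 E2 E3 E4 Na Nb Nc Nd R12 R13 R14 R23 R24 R34.
  set (r12 := rf a1 a2 a3 b1 b2 b3) in *. set (r13 := rf a1 a2 a3 c1 c2 c3) in *.
  set (r14 := rf a1 a2 a3 d1 d2 d3) in *. set (r23 := rf b1 b2 b3 c1 c2 c3) in *.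
  set (r24 := rf b1 b2 b3 d1 d2 d3) in *. set (r34 := rf c1 c2 c3 d1 d2 d3) in *.
  assert (T123 : r12 * r23 * r13 < 0) by (apply tri_lt; auto).
  assert (T124 : r12 * r24 * r14 < 0) by (apply tri_lt; auto).
  assert (T134 : r13 * r34 * r14 < 0) by (apply tri_lt; auto).
  assert (T132 : r13 * r23 * r12 < 0).
  { replace (r13 * r23 * r12) with (r12 * r23 * r13) by ring. auto. }
  assert (Q := quad _ _ _ _ _ _ _ _ _ _ _ _ Na Nb Nc Nd). simpl in Q. fold r12 r13 r14 r23 r24 r34 in Q.
  assert (HX1 : crossX P1 P2 P3 P4 = RtoC (r13 * r24 / (r14 * r23))).
  { unfold crossX. rewrite E1, E2, E3, E4, !herm_lift by auto.
    rewrite (rf_sym c1 c2 c3), (rf_sym d1 d2 d3 b1 b2 b3), (rf_sym d1 d2 d3 a1 a2 a3), (rf_sym c1 c2 c3 b1 b2 b3).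
    fold r12 r13 r14 r23 r24 r34.
    rewrite RtoC_div, !RtoC_mult by (apply Rmult_integral_contrapositive_currified; auto).
    field. repeat split; try apply Cconj_nz; try apply RtoC_neq; auto. }
  assert (HX2 : crossX P1 P3 P2 P4 = RtoC (r12 * r34 / (r14 * r23))).
  { unfold crossX. rewrite E1, E2, E3, E4, !herm_lift by auto.
    rewrite (rf_sym b1 b2 b3 a1 a2 a3), (rf_sym d1 d2 d3 c1 c2 c3), (rf_sym d1 d2 d3 a1 a2 a3).
    fold r12 r13 r14 r23 r24 r34.
    rewrite RtoC_div, !RtoC_mult by (apply Rmult_integral_contrapositive_currified; auto).
    field. repeat split; try apply Cconj_nz; try apply RtoC_neq; auto. }
  split; [|split; [|split]].
  - unfold cartanA. rewrite E1, E2, E3, !herm_lift by auto.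
    rewrite (rf_sym c1 c2 c3). fold r12 r13 r23.
    replace (- (l1 * Cconj l2 * RtoC r12 * (l2 * Cconj l3 * RtoC r23) * (l3 * Cconj l1 * RtoC r13)))%C
      with (RtoC (- (Cmod l1 ^ 2 * Cmod l2 ^ 2 * Cmod l3 ^ 2 * (r12 * r23 * r13)))).
    2: { rewrite RtoC_opp, !RtoC_mult, !Cmod2_conj. ring. }
    apply carg_pos.
    assert (0 < Cmod l1) by (apply Cmod_gt_0; auto).
    assert (0 < Cmod l2) by (apply Cmod_gt_0; auto).
    assert (0 < Cmod l3) by (apply Cmod_gt_0; auto).
    assert (0 < Cmod l1 ^ 2 * Cmod l2 ^ 2 * Cmod l3 ^ 2)
      by (apply Rmult_lt_0_compat; [apply Rmult_lt_0_compat|]; apply pow_lt; auto).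
    nra.
  - rewrite HX1. split; [apply im_RtoC|]. rewrite re_RtoC. apply pos_ratio.
    pose proof (sign4 r12 r23 r13 r24 r14 T123 T124 R12). nra.
  - rewrite HX2. split; [apply im_RtoC|]. rewrite re_RtoC. apply pos_ratio.
    pose proof (sign4 r13 r23 r12 r34 r14 T132 T134 R13). nra.
  - rewrite HX1, HX2.
    set (q1 := r13 * r24 / (r14 * r23)). set (q2 := r12 * r34 / (r14 * r23)).
    assert (Heq : -2 * (q1 + q2) - 2 * q1 * q2 + q1 * q1 + q2 * q2 + 1 = 0).
    { assert (r14 * r23 <> 0) by (apply Rmult_integral_contrapositive_currified; auto).
      replace (-2 * (q1 + q2) - 2 * q1 * q2 + q1 * q1 + q2 * q2 + 1) with
        ((r12*r12*r34*r34 + r13*r13*r24*r24 + r14*r14*r23*r23 - 2*r12*r34*r13*r24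
         - 2*r12*r34*r14*r23 - 2*r13*r24*r14*r23) / ((r14*r23)*(r14*r23))) by (unfold q1, q2; field; auto).
      rewrite Q. unfold Rdiv. ring. }
    replace (RtoC 0) with (RtoC (-2 * (q1 + q2) - 2 * q1 * q2 + q1 * q1 + q2 * q2 + 1)) by (rewrite Heq; auto).
    rewrite !RtoC_plus, !RtoC_minus, !RtoC_mult, !RtoC_plus. ring.
Qed.

Lemma noprop g Pi Pj li lj a1 a2 a3 b1 b2 b3 : unitary21 g ->
  li <> RtoC 0 -> lj <> RtoC 0 ->
  Pi = vscal li (g (real_vec a1 a2 a3)) -> Pj = vscal lj (g (real_vec b1 b2 b3)) ->
  rf a1 a2 a3 a1 a2 a3 = 0 -> rf b1 b2 b3 b1 b2 b3 = 0 ->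
  ~ (a1 = 0 /\ a2 = 0 /\ a3 = 0) -> ~ (b1 = 0 /\ b2 = 0 /\ b3 = 0) ->
  ~ proj_eq Pi Pj -> rf a1 a2 a3 b1 b2 b3 <> 0.
Proof.
  intros Hg Li Lj Ei Ej Na Nb Za Zb NP R0.
  destruct (orth_prop _ _ _ _ _ _ Na Nb Za Zb R0) as (t & e1 & e2 & e3).
  assert (Ht : t <> 0). { intro; subst. apply Zb. repeat split; lra. }
  apply NP. exists (lj * RtoC t / li)%C. split.
  { apply Cmult_neq_0; [apply Cmult_neq_0; [auto| apply RtoC_neq; auto] | apply Cinv_nz; auto]. }
  assert (Hv : real_vec b1 b2 b3 = vscal (RtoC t) (real_vec a1 a2 a3)).
  { apply vec_ext; unfold real_vec, vscal; simpl; rewrite ?e1, ?e2, ?e3, RtoC_mult; reflexivity. }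
  destruct Hg as (_ & Hs & _).
  rewrite Ej, Ei, Hv, Hs. apply vec_ext; unfold vscal; simpl; field; auto.
Qed.

Lemma real_nz a1 a2 a3 : real_vec a1 a2 a3 <> vzero -> ~ (a1 = 0 /\ a2 = 0 /\ a3 = 0).
Proof. intros H [E1 [E2 E3]]. subst. apply H. reflexivity. Qed.

Lemma real_null a1 a2 a3 : herm (real_vec a1 a2 a3) (real_vec a1 a2 a3) = RtoC 0 ->
  rf a1 a2 a3 a1 a2 a3 = 0.
Proof. rewrite herm_realv. intros H. apply (f_equal Re) in H. simpl in H. exact H. Qed.

Theorem theorem3p3 (P1 P2 P3 P4 : vec) :
  null_vec P1 -> null_vec P2 -> null_vec P3 -> null_vec P4 ->
  ~ proj_eq P1 P2 -> ~ proj_eq P1 P3 -> ~ proj_eq P1 P4 ->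
  ~ proj_eq P2 P3 -> ~ proj_eq P2 P4 -> ~ proj_eq P3 P4 ->
  ((exists S : vec -> Prop, is_Rcircle S /\ S P1 /\ S P2 /\ S P3 /\ S P4) <->
   (cartanA P1 P2 P3 = 0%R /\
    pos_real (crossX P1 P2 P3 P4) /\ pos_real (crossX P1 P3 P2 P4) /\
    ((- RtoC 2) * (crossX P1 P2 P3 P4 + crossX P1 P3 P2 P4)
     - RtoC 2 * crossX P1 P2 P3 P4 * crossX P1 P3 P2 P4
     + crossX P1 P2 P3 P4 * crossX P1 P2 P3 P4
     + crossX P1 P3 P2 P4 * crossX P1 P3 P2 P4 + RtoC 1 = RtoC 0)%C)).
Proof.
  intros N1 N2 N3 N4 NP12 NP13 NP14 NP23 NP24 NP34. split.
  - intros (S & (g & Hg & HS) & S1 & S2 & S3 & S4).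
    apply HS in S1, S2, S3, S4.
    destruct S1 as (_ & a1 & a2 & a3 & Za & Na & l1 & L1 & E1).
    destruct S2 as (_ & b1 & b2 & b3 & Zb & Nb & l2 & L2 & E2).
    destruct S3 as (_ & c1 & c2 & c3 & Zc & Nc & l3 & L3 & E3).
    destruct S4 as (_ & d1 & d2 & d3 & Zd & Nd & l4 & L4 & E4).
    apply real_nz in Za, Zb, Zc, Zd. apply real_null in Na, Nb, Nc, Nd.
    apply (forward g P1 P2 P3 P4 l1 l2 l3 l4 a1 a2 a3 b1 b2 b3 c1 c2 c3 d1 d2 d3); auto.
    + apply (noprop g P1 P2 l1 l2 a1 a2 a3 b1 b2 b3); auto.
    + apply (noprop g P1 P3 l1 l3 a1 a2 a3 c1 c2 c3); auto.
    + apply (noprop g P1 P4 l1 l4 a1 a2 a3 d1 d2 d3); auto.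
    + apply (noprop g P2 P3 l2 l3 b1 b2 b3 c1 c2 c3); auto.
    + apply (noprop g P2 P4 l2 l4 b1 b2 b3 d1 d2 d3); auto.
    + apply (noprop g P3 P4 l3 l4 c1 c2 c3 d1 d2 d3); auto.
  - intros [HA [PX1 [PX2 Heq]]]. destruct PX1 as [I1 Re1]. destruct PX2 as [I2 Re2].
    assert (X1nz : crossX P1 P2 P3 P4 <> RtoC 0).
    { intro E. rewrite E in Re1. simpl in Re1. lra. }
    assert (X2nz : crossX P1 P3 P2 P4 <> RtoC 0).
    { intro E. rewrite E in Re2. simpl in Re2. lra. }
    destruct (frac_nz _ _ _ _ X1nz) as (H31 & H42 & H41 & H32).
    destruct (frac_nz _ _ _ _ X2nz) as (H21 & H43 & _ & H23).
    assert (H12 : herm P1 P2 <> RtoC 0).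
    { intro E. apply H21. rewrite <- herm_sym, E, Cconj_R. reflexivity. }
    set (z := (- (herm P1 P2 * herm P2 P3 * herm P3 P1))%C).
    assert (Hz : z <> RtoC 0).
    { assert (Hp : (herm P1 P2 * herm P2 P3 * herm P3 P1)%C <> RtoC 0)
        by (apply Cmult_neq_0; [apply Cmult_neq_0|]; auto).
      intro E. apply Hp. replace (herm P1 P2 * herm P2 P3 * herm P3 P1)%C with (- z)%C
        by (unfold z; ring). rewrite E. ring. }
    destruct (carg_zero z HA Hz) as [Iz Rz].
    set (p := Re z) in *.
    assert (Hm12 : 0 < Cmod (herm P1 P2)) by (apply Cmod_gt_0; auto).
    assert (Hm23 : 0 < Cmod (herm P2 P3)) by (apply Cmod_gt_0; auto).
    assert (Hq : 0 < 2 * p / (Cmod (herm P1 P2) ^ 2 * Cmod (herm P2 P3) ^ 2)).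
    { apply Rdiv_lt_0_compat; [lra|]. apply Rmult_lt_0_compat; apply pow_lt; auto. }
    set (b := sqrt (2 * p / (Cmod (herm P1 P2) ^ 2 * Cmod (herm P2 P3) ^ 2))).
    assert (Hb : 0 < b) by (apply sqrt_lt_R0; auto).
    assert (Hbb : (RtoC b * RtoC b)%C = (RtoC 2 * z / (herm P1 P2 * herm P2 P1 * (herm P2 P3 * herm P3 P2)))%C).
    { rewrite <- RtoC_mult. unfold b. rewrite sqrt_sqrt by lra.
      rewrite RtoC_div, !RtoC_mult.
      2: { apply Rmult_integral_contrapositive_currified; apply pow_nonzero; lra. }
      rewrite !Cmod2_conj, !herm_sym. unfold p. rewrite <- (C_real z Iz). reflexivity. }
    assert (F : (RtoC 2 * herm P3 P1 = - (RtoC b * RtoC b * herm P2 P1 * herm P3 P2))%C).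
    { rewrite Hbb. unfold z. field. repeat split; auto. }
    set (x1 := Re (crossX P1 P2 P3 P4)) in *. set (x2 := Re (crossX P1 P3 P2 P4)) in *.
    assert (HX1 : RtoC x1 = crossX P1 P2 P3 P4) by (symmetry; apply C_real; auto).
    assert (HX2 : RtoC x2 = crossX P1 P3 P2 P4) by (symmetry; apply C_real; auto).
    assert (Hr : RtoC (-2 * (x1 + x2) - 2 * x1 * x2 + x1 * x1 + x2 * x2 + 1) = RtoC 0).
    { rewrite <- Heq, <- HX1, <- HX2. rewrite !RtoC_plus, !RtoC_minus, !RtoC_mult, !RtoC_plus. ring. }
    apply (f_equal Re) in Hr. rewrite !re_RtoC in Hr.
    destruct (build P1 P2 P3 P4 b x1 x2) as (g & Hg & C1 & C2 & C3 & C4); auto; try lra.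
    exists (Rcircle_of g).
    exact (conj (ex_intro _ g (conj Hg (fun P => iff_refl _))) (conj C1 (conj C2 (conj C3 C4)))).
Qed.
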